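(* Let $k$ be a field of characteristic $0$, $A$ a commutative $k$-algebra with an ideal $I$, $I^2=0$, such that $\underline{A}:=A/I$ is smooth over $k$, and let $\tau:\underline{A}\to A$ be a $k$-algebra splitting of $A\to\underline{A}$; regard $A$ as an $\underline{A}$-algebra via $\tau$. Let $B\twoheadrightarrow A$ be a surjection of $\underline{A}$-algebras with $B$ smooth over $\underline{A}$, let $\hat{B}$ be the completion of $B$ along the kernel of this surjection, $\hat{J}$ the kernel of the induced surjection $\hat{B}\to A$, $\hat{I}$ the inverse image of $I$ in $\hat{B}$, and $\hat{\tau}:\underline{A}\to\hat{B}$ the structure map. For $a\in A^\flat$, let $\underline{a}$ be its image in $\underline{A}$, $\hat{\underline{a}}:=\hat\tau(\underline{a})$, and $\tilde{a}\in\hat{B}$ any lift of $a$. Then the class of $$-\frac{1}{2}\,\frac{(\tilde{a}-\hat{\underline{a}})^3}{\hat{\underline{a}}^2(\hat{\underline{a}}-1)^2}$$ in $\hat{J}/\hat{J}^2$ is independent of the choice of the lift $\tilde a$, and it lies in the kernel of the map $\hat{J}/\hat{J}^2\to\Omega^1_{\hat{B}}/\hat{J}\Omega^1_{\hat{B}}$ induced by the (absolute) differential $d$.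
   Context: $A^\flat$ denotes the set of units $a\in A$ such that $1-a$ is also a unit. K\''ahler differentials are relative to $\mathbb{Q}$. *)

(* Defs.v *)
From HB Require Import structures.
From mathcomp Require Import all_boot all_order all_algebra.
From mathcomp Require Import finmap.
From mathcomp Require Import mpoly.

Set Implicit Arguments.
Unset Strict Implicit.
Unset Printing Implicit Defensive.
Import GRing.Theory.
Local Open Scope ring_scope.

Definition kernel (R : Type) (S : zmodType) (f : R -> S) : R -> Prop :=
  fun x => f x = 0.

Definition is_unit (R : comNzRingType) (x : R) : Prop := exists y, x * y = 1.

Definition flat (R : comNzRingType) (a : R) : Prop := is_unit a /\ is_unit (1 - a).

Fixpoint ideal_pow (R : comNzRingType) (K : R -> Prop) (n : nat) : R -> Prop :=
  match n with
  | 0 => fun _ => True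
  | n.+1 => fun x => exists s : seq (R * R),
      (forall p, p \in s -> ideal_pow K n p.1 /\ K p.2) /\
      x = \sum_(p <- s) p.1 * p.2
  end.

Definition ideal_mod (R : comNzRingType) (M : lmodType R) (J : R -> Prop) : M -> Prop :=
  fun v => exists s : seq (R * M),
      (forall p, p \in s -> J p.1) /\ v = \sum_(p <- s) p.1 *: p.2.

(* (absolute, i.e. over Z, equivalently over Q in characteristic 0)
   derivation of R with values in an R-module M *)
Definition derivation (R : comNzRingType) (M : lmodType R) (D : R -> M) : Prop :=
  (forall x y, D (x + y) = D x + D y) /\
  (forall x y, D (x * y) = x *: D y + y *: D x).

Definition alg_hom (R : comNzRingType) (S T : comAlgType R) (f : S -> T) : Prop :=
  (forall x y, f (x + y) = f x + f y) /\ (forall x y, f (x * y) = f x * f y) /\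
  f 1 = 1 /\ (forall (c : R) x, f (c *: x) = c *: f x).

Definition finitely_presented (R : comNzRingType) (S : comAlgType R) : Prop :=
  exists (n : nat) (v : 'I_n -> S),
    let ev := mpoly.mmap (fun r : R => r%:A) v in
    (forall s : S, exists p : mpoly.mpoly n R, ev p = s) /\
    exists gs : seq (mpoly.mpoly n R),
      forall p : mpoly.mpoly n R,
        ev p = 0 <-> exists cs : seq (mpoly.mpoly n R),
          p = \sum_(i < size gs) cs`_i * gs`_i.

Definition formally_smooth (R : comNzRingType) (S : comAlgType R) : Prop :=
  forall (C D : comAlgType R) (p : C -> D),
    alg_hom p -> (forall d, exists c, p c = d) ->
    (forall x y, p x = 0 -> p y = 0 -> x * y = 0) ->
    forall f : S -> D, alg_hom f ->
      exists g : S -> C, alg_hom g /\ (forall s, p (g s) = f s).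

Definition smooth (R : comNzRingType) (S : comAlgType R) : Prop :=
  finitely_presented S /\ formally_smooth S.

Definition flat_elt (R : comUnitRingType) (t u : R) : R :=
  - (2%:R)^-1 * (t - u) ^+ 3 / (u ^+ 2 * (u - 1) ^+ 2).

(* Main.v *)
Require Import Defs.
From HB Require Import structures.
From mathcomp Require Import all_boot all_order all_algebra.
From mathcomp Require Import ring.
Import GRing.Theory.
Local Open Scope ring_scope.

Theorem proposition3p2
  (* the field k of characteristic 0 *)
  (k : fieldType) (chark : [pchar k] =i pred0)
  (* A, its square-zero ideal I := ker pi, and A_ := A/I presented by pi *)
  (A Abar : comAlgType k) (pi : A -> Abar) (pi_alg : alg_hom pi)
  (pi_surj : forall y, exists x, pi x = y)
  (I_sq0 : forall x y, pi x = 0 -> pi y = 0 -> x * y = 0)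
  (Abar_smooth : smooth Abar)
  (* the k-algebra splitting tau *)
  (tau : Abar -> A) (tau_alg : alg_hom tau) (tau_split : forall y, pi (tau y) = y)
  (* B smooth over A_ with a surjection phi : B ->> A of A_-algebras *)
  (B : comAlgType Abar) (B_smooth : smooth B)
  (phi : {rmorphism B -> A}) (phi_surj : forall x, exists b, phi b = x)
  (phi_lin : forall r : Abar, phi (r%:A) = tau r)
  (* quotients Q n = B / K^(n+1), K := ker phi, with transition maps *)
  (Q : nat -> comNzRingType) (q : forall n, {rmorphism B -> Q n})
  (q_surj : forall n y, exists b, q n b = y)
  (q_ker : forall n b, q n b = 0 <-> ideal_pow (kernel phi) n.+1 b)
  (t : forall n, {rmorphism Q n.+1 -> Q n})
  (t_q : forall n b, t n (q n.+1 b) = q n b)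
  (* Bhat = lim_n B / K^(n+1), the K-adic completion of B *)
  (Bhat : comUnitRingType) (rho : forall n, {rmorphism Bhat -> Q n})
  (rho_t : forall n x, t n (rho n.+1 x) = rho n x)
  (rho_lim : forall y : (forall n, Q n), (forall n, t n (y n.+1) = y n) ->
       exists x, (forall n, rho n x = y n) /\
                 forall x', (forall n, rho n x' = y n) -> x' = x)
  (iota : {rmorphism B -> Bhat}) (rho_iota : forall n b, rho n (iota b) = q n b)
  (* the induced surjection psi : Bhat ->> A *)
  (psi : {rmorphism Bhat -> A})
  (psi_def : forall x b, rho 0%N x = q 0%N b -> psi x = phi b) :
  let Jhat := kernel psi in
  let tauhat := fun r : Abar => iota (r%:A) in
  forall a : A, flat a ->
    let ahat := tauhat (pi a) in
    (* the class in Jhat/Jhat^2 is well defined and independent of the lift *)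
    (forall at1 : Bhat, psi at1 = a -> Jhat (flat_elt at1 ahat)) /\
    (forall at1 at2 : Bhat, psi at1 = a -> psi at2 = a ->
       ideal_pow Jhat 2 (flat_elt at1 ahat - flat_elt at2 ahat)) /\
    (* it lies in the kernel of Jhat/Jhat^2 -> Omega^1_Bhat / Jhat Omega^1_Bhat:
       for every derivation D of Bhat into a Bhat-module M, D(elt) \in Jhat M *)
    (forall at1 : Bhat, psi at1 = a ->
       forall (M : lmodType Bhat) (D : Bhat -> M), derivation D ->
         ideal_mod Jhat (D (flat_elt at1 ahat))).
Proof.
move=> Jhat tauhat a _ ahat.
have psi_ahat : psi ahat = tau (pi a).
  by rewrite -phi_lin; apply: psi_def; rewrite rho_iota.
have pi0 : pi (a - tau (pi a)) = 0.
  case: pi_alg => pD _.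
  apply: (@addrI _ (pi a)); rewrite addr0.
  have := pD (tau (pi a)) (a - tau (pi a)).
  by rewrite addrC subrK tau_split => <-.
have e2 : (a - tau (pi a)) * (a - tau (pi a)) = 0 by apply: I_sq0.
have psix : forall at1, psi at1 = a -> psi (at1 - ahat) = a - tau (pi a).
  by move=> at1 h; rewrite rmorphB h psi_ahat.
set c := - (2%:R : Bhat)^-1 / (ahat ^+ 2 * (ahat - 1) ^+ 2).
have fE : forall at1, flat_elt at1 ahat = (at1 - ahat) * (at1 - ahat) * ((at1 - ahat) * c).
  move=> at1; rewrite /flat_elt /c.
  by ring.
have Jx2 : forall at1, psi at1 = a -> Jhat ((at1 - ahat) * (at1 - ahat)).
  by move=> at1 h; rewrite /Jhat /kernel rmorphM psix.
split.
  move=> at1 h; rewrite /Jhat /kernel fE !rmorphM psix // e2 !mul0r //.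
split.
  move=> at1 at2 h1 h2.
  set x1 := at1 - ahat; set x2 := at2 - ahat.
  exists [:: (c * (x1 - x2), x1 * x1 + x1 * x2 + x2 * x2)]; split.
    move=> p; rewrite inE => /eqP -> /=; split.
      exists [:: (1, c * (x1 - x2))]; split.
        move=> p'; rewrite inE => /eqP -> /=; split=> //.
        by rewrite /Jhat /kernel rmorphM rmorphB /x1 /x2 !psix // subrr mulr0.
      by rewrite big_cons big_nil addr0 mul1r.
    rewrite /Jhat /kernel !rmorphD !rmorphM /x1 /x2 !psix // e2 !addr0 //.
  rewrite big_cons big_nil addr0 /= !fE -/x1 -/x2.
  by ring.
move=> at1 h M D [DD DM].
set x := at1 - ahat.
rewrite fE -/x DM (DM x x).
exists [:: (x * x, D (x * c)); (x * c * x, D x); (x * c * x, D x)]; split.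
  move=> p; rewrite !inE => /orP [/eqP ->|/orP [/eqP ->|/eqP ->]] /=;
    first exact: Jx2.
    by rewrite /Jhat /kernel !rmorphM psix // mulrAC e2 mul0r.
  by rewrite /Jhat /kernel !rmorphM psix // mulrAC e2 mul0r.
rewrite !big_cons big_nil addr0 /=.
rewrite scalerDr !scalerA.
by rewrite [x * c * x]mulrAC -[x * x * c]mulrA [x * c]mulrC !addrA.
Qed.
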